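(* In Case I, there exist a smooth volume form $\Omega$ on $X$ and a constant $C>0$ such that for all $t\in[0,T)$, $C^{-1}(T-t)\,\Omega\leqslant \omega(t)^n\leqslant C(T-t)\,\Omega$.
   Context: Setting: $X=X_{n,k}=\mathbb P(\mathcal O_{\mathbb{CP}^{n-1}}\oplus\mathcal O_{\mathbb{CP}^{n-1}}(-k))$, $n\geqslant2,k\geqslant1$, with divisors $D_0,D_\infty$; $\omega(t)$, $t\in[0,T)$, is the solution of $\omega(t)=\omega_0-t\,\mathrm{Ric}(\omega(t))$, $\omega(0)=\omega_0$, with $T=\sup\{t\geqslant0:[\omega_0]-tc_1(X)\text{ Kähler}\}$, where $\omega_0$ is Kähler with Calabi symmetry (on $X\setminus(D_0\cup D_\infty)\cong$ region with coordinates $x\in\mathbb C^n\setminus\{0\}$, $\omega_0=\sqrt{-1}\partial\bar\partial u_0(\rho)$, $\rho=\log\sum|x_i|^2$, with $u_0'>0$, $u_0''>0$ and the standard smooth extension conditions across $D_0,D_\infty$) and class $\frac{b_0}{k}[D_\infty]-\frac{a_0}{k}[D_0]$, $0<a_0<b_0$, $a_0=\lim_{\rho\to-\infty}u_0'$, $b_0=\lim_{\rho\to\infty}u_0'$. Case I: $a_0(n+k)>b_0(n-k)$; then $T=\frac{b_0-a_0}{2k}$ and $a_t=a_0+(k-n)t$ stays $\geqslant\min(a_0,a_T)>0$. *)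

(* Defs.v *)
(* Calabi-symmetric reduction of the
   Kahler-Ricci continuity equation on X_{n,k}. *)
From Stdlib Require Import Reals.
From Coquelicot Require Import Coquelicot.
Open Scope R_scope.

Definition smooth (f : R -> R) : Prop :=
  forall (m : nat) (x : R), ex_derive_n f m x.

(* u : R -> R (a function of rho = log |x|^2) is the potential of a
   Calabi-symmetric Kahler form omega = i dd^c u(rho) on X_{n,k} whose
   class is (b/k)[D_inf] - (a/k)[D_0]: u' > 0, u'' > 0 and the standard
   smooth extension conditions across D_0 (rho -> -oo) and D_inf
   (rho -> +oo). *)
Definition calabi_potential (k : nat) (a b : R) (u : R -> R) : Prop :=
  smooth u /\
  (forall r, 0 < Derive u r) /\
  (forall r, 0 < Derive_n u 2 r) /\
  exists v0 vinf : R -> R,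
    smooth v0 /\ smooth vinf /\ 0 < Derive v0 0 /\ 0 < Derive vinf 0 /\
    (forall r, u r = a * r + v0 (exp (INR k * r))) /\
    (forall r, u r = b * r + vinf (exp (- INR k * r))).

(* density of omega^n = (i dd^c u(rho))^n with respect to the Euclidean
   volume form of the x-coordinates (up to a universal constant):
   det g = (u')^(n-1) u'' e^{-n rho}. *)
Definition vol_dens (n : nat) (u : R -> R) (r : R) : R :=
  (Derive u r) ^ (n - 1) * Derive_n u 2 r * exp (- INR n * r).

(* g is such that Omega = g(rho) e^{-n rho} (Euclidean volume, same
   normalising constant) is a smooth (radial) volume form on X_{n,k}:
   positive and smoothly extending, non-vanishing, across D_0 and D_inf. *)
Definition radial_volume_form (k : nat) (g : R -> R) : Prop :=
  (forall r, 0 < g r) /\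
  exists G0 Ginf : R -> R,
    smooth G0 /\ smooth Ginf /\ 0 < G0 0 /\ 0 < Ginf 0 /\
    (forall r, g r = exp (INR k * r) * G0 (exp (INR k * r))) /\
    (forall r, g r = exp (- INR k * r) * Ginf (exp (- INR k * r))).

(* Main.v *)
Require Import Defs.
From Stdlib Require Import Reals Lra Lia.
From Coquelicot Require Import Coquelicot.
Open Scope R_scope.


Lemma Dn_D (f : R -> R) (m : nat) (y : R) :
  Derive_n (Derive f) m y = Derive_n f (S m) y.
Proof.
  induction m as [|m IH] in y |- *; simpl. reflexivity.
  apply Derive_ext. intro; apply IH.
Qed.

Lemma exn_S (h : R -> R) (m : nat) (x : R) :
  ex_derive h x -> ex_derive_n (Derive h) m x -> ex_derive_n h (S m) x.
Proof.
  destruct m as [|m]; simpl; intros H1 H2. exact H1.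
  eapply ex_derive_ext; [|exact H2]. intro; apply Dn_D.
Qed.

Lemma exn_S' (h : R -> R) (m : nat) (x : R) :
  ex_derive_n h (S m) x -> ex_derive_n (Derive h) m x.
Proof.
  destruct m as [|m]; simpl; intros H. exact I.
  eapply ex_derive_ext; [|exact H]. intro; symmetry; apply Dn_D.
Qed.

Lemma smooth_ex (f : R -> R) x : smooth f -> ex_derive f x.
Proof. intro H. exact (H 1%nat x). Qed.

Lemma smooth_D (f : R -> R) : smooth f -> smooth (Derive f).
Proof. intros H m x. apply exn_S'. apply H. Qed.

Lemma smooth_ext (f g : R -> R) : (forall x, f x = g x) -> smooth f -> smooth g.
Proof. intros E H m x. eapply ex_derive_n_ext; [exact E|apply H]. Qed.

Lemma smooth_plus (f g : R -> R) : smooth f -> smooth g -> smooth (fun x => f x + g x).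
Proof.
  intros Hf Hg m x. apply ex_derive_n_plus; apply filter_forall; intros; auto.
Qed.

Lemma smooth_const (c : R) : smooth (fun _ => c).
Proof. intros m x. apply ex_derive_n_const. Qed.

Lemma smooth_id : smooth (fun x => x).
Proof.
  intros m x. destruct m as [|m]. exact I.
  apply exn_S. apply ex_derive_id.
  eapply ex_derive_n_ext; [|apply (ex_derive_n_const 1)].
  intro t. symmetry. apply is_derive_unique. auto_derive; [exact I|ring].
Qed.

Lemma smooth_mult (f g : R -> R) : smooth f -> smooth g -> smooth (fun x => f x * g x).
Proof.
  intros Hf Hg m.
  assert (Q : forall m, forall f g, smooth f -> smooth g ->
     forall j, (j <= m)%nat -> forall x, ex_derive_n (fun x => f x * g x) j x).
  { clear. intro m. induction m as [|m IH]; intros f g Hf Hg j Hj x.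
    - assert (j = 0%nat) by lia. subst. exact I.
    - destruct j as [|j]. exact I.
      apply exn_S. apply ex_derive_mult; apply smooth_ex; auto.
      eapply ex_derive_n_ext.
      { intro t. symmetry. apply Derive_mult; apply smooth_ex; auto. }
      apply ex_derive_n_plus; apply filter_forall; intros y k Hk.
      + apply (IH (Derive f) g); auto. apply smooth_D; auto. lia.
      + apply (IH f (Derive g)); auto. apply smooth_D; auto. lia. }
  intro x. apply (Q m f g Hf Hg m (le_n _) x).
Qed.

Lemma smooth_exp (w : R -> R) : smooth w -> smooth (fun x => exp (w x)).
Proof.
  intros Hw.
  assert (E : forall m, forall p, smooth p ->
     forall j, (j <= m)%nat -> forall x, ex_derive_n (fun x => p x * exp (w x)) j x).
  { intro m. induction m as [|m IH]; intros p Hp j Hj x.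
    - assert (j = 0%nat) by lia. subst. exact I.
    - destruct j as [|j]. exact I.
      assert (Dexp : forall t, is_derive (fun x => p x * exp (w x)) t
                 ((Derive p t + p t * Derive w t) * exp (w t))).
      { intro t.
        assert (H1 := Derive_correct p t (smooth_ex p t Hp)).
        assert (H2 := Derive_correct w t (smooth_ex w t Hw)).
        assert (H3 : is_derive (fun x => exp (w x)) t (Derive w t * exp (w t))).
        { apply (is_derive_comp exp w t (exp (w t)) (Derive w t)). apply is_derive_exp. exact H2. }
        assert (H4 := is_derive_mult p (fun x => exp (w x)) t _ _ H1 H3 (fun a b => Rmult_comm a b)).
        eapply is_derive_ext; [intro; reflexivity|].
        replace ((Derive p t + p t * Derive w t) * exp (w t)) with
          (Derive p t * exp (w t) + p t * (Derive w t * exp (w t))) by ring.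
        exact H4. }
      apply exn_S. eexists; apply Dexp.
      eapply ex_derive_n_ext.
      { intro t. symmetry. apply is_derive_unique. apply Dexp. }
      apply IH; [|lia].
      apply smooth_plus. apply smooth_D; auto. apply smooth_mult; auto. apply smooth_D; auto. }
  intros m x. eapply ex_derive_n_ext; [|apply (E m (fun _ => 1) (smooth_const 1) m (le_n _) x)].
  intro; simpl; ring.
Qed.

Lemma side_deriv (s al : R) (v u : R -> R) : smooth v ->
  (forall r, u r = al * r + v (exp (s * r))) ->
  (forall r, Derive u r = al + s * exp (s * r) * Derive v (exp (s * r))) /\
  (forall r, Derive_n u 2 r = s ^ 2 * exp (s * r) *
        (Derive v (exp (s * r)) + exp (s * r) * Derive_n v 2 (exp (s * r)))).
Proof.
  intros Hv Hu.
  assert (D1 : forall r, Derive u r = al + s * exp (s * r) * Derive v (exp (s * r))).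
  { intro r. rewrite (Derive_ext u (fun r => al * r + v (exp (s * r)))) by auto.
    apply is_derive_unique. auto_derive.
    - apply smooth_ex; auto.
    - replace (Derive (fun x : R => v x) (exp (s * r))) with (Derive v (exp (s * r))) by reflexivity. ring. }
  split; auto.
  intro r. simpl.
  rewrite (Derive_ext (fun x => Derive u x) (fun r => al + s * exp (s * r) * Derive v (exp (s * r)))) by auto.
  apply is_derive_unique. auto_derive.
  - apply (smooth_ex (Derive v)). apply smooth_D; auto.
  - replace (Derive (fun x : R => Derive (fun x0 : R => v x0) x) (exp (s * r))) with (Derive (fun x : R => Derive v x) (exp (s * r))) by reflexivity. ring.
Qed.

Lemma deriv_cont (h : R -> R) x d : is_derive h x d -> continuity_pt h x.
Proof.
  intro H. apply continuity_pt_filterlim. apply (ex_derive_continuous h x). exists d; exact H.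
Qed.

Lemma deriv_pos_right (h : R -> R) (x d : R) : is_derive h x d -> 0 < d ->
  exists del, 0 < del /\ forall y, x < y < x + del -> h x < h y.
Proof.
  intros H Hd. apply is_derive_Reals in H.
  destruct (H d Hd) as [del Hdel].
  exists del. split. apply cond_pos. intros y Hy.
  assert (Hne : y - x <> 0) by lra.
  assert (Hab : Rabs (y - x) < del) by (rewrite Rabs_pos_eq; lra).
  specialize (Hdel (y - x) Hne Hab).
  replace (x + (y - x)) with y in Hdel by ring.
  apply Rabs_def2 in Hdel. destruct Hdel as [_ Hl].
  assert (0 < (h y - h x) / (y - x)) by lra.
  assert (0 < h y - h x).
  { replace (h y - h x) with (((h y - h x) / (y - x)) * (y - x)) by (field; lra).
    apply Rmult_lt_0_compat; lra. }
  lra.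
Qed.

Lemma neg_near (h : R -> R) x : continuity_pt h x -> h x < 0 ->
  exists del, 0 < del /\ forall y, Rabs (y - x) < del -> h y < 0.
Proof.
  intros Hc Hn. destruct (Hc (- h x)) as [alp [Ha Hal]]; [lra|].
  exists alp. split; auto. intros y Hy.
  destruct (Req_dec y x) as [->|Hne]; auto.
  assert (Hal' : R_dist (h y) (h x) < - h x).
  { apply (Hal y). split. split. exact I. auto. exact Hy. }
  unfold R_dist in Hal'. apply Rabs_def2 in Hal'. lra.
Qed.

Lemma mvt (F h : R -> R) a b : (forall x, is_derive F x (h x)) -> a <= b ->
  exists c, a <= c <= b /\ F b - F a = h c * (b - a).
Proof.
  intros HF Hab.
  destruct (MVT_gen F a b h) as [c [Hc E]].
  - intros; apply HF.
  - intros; eapply deriv_cont; apply HF.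
  - exists c. rewrite Rmin_left in Hc by lra. rewrite Rmax_right in Hc by lra. auto.
Qed.

Lemma maxp_right (F h dh : R -> R) (B : R) :
  (forall x, is_derive F x (h x)) ->
  (forall x, is_derive h x (dh x)) ->
  (forall x, B < F x -> 0 < dh x) ->
  (forall e x0, 0 < e -> exists x, x0 <= x /\ Rabs (h x) < e) ->
  forall x1, 0 <= h x1 -> F x1 <= B.
Proof.
  intros HF Hh Hpos Hinf x1 H1.
  destruct (Rle_or_lt (F x1) B) as [|HB]; auto. exfalso.
  assert (S1 : forall x2, x1 <= x2 -> F x1 <= F x2).
  { intros x2 H12. destruct (Req_dec x1 x2) as [->|Hne]; [lra|].
    destruct (continuity_ab_maj F x1 x2) as [xm [Hm Hxm]]; [lra| |].
    { intros; eapply deriv_cont; apply HF. }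
    destruct (Req_dec xm x2) as [->|Hne2].
    { apply Hm; lra. }
    assert (Hmax : F x1 <= F xm) by (apply Hm; lra).
    assert (Hd : 0 < dh xm) by (apply Hpos; lra).
    destruct (Rle_or_lt 0 (h xm)) as [Hp|Hn].
    - destruct (deriv_pos_right h xm (dh xm) (Hh xm) Hd) as [del [Hdel Hr]].
      set (y2 := Rmin (xm + del / 2) x2).
      assert (Hy2 : xm < y2 <= x2 /\ y2 < xm + del).
      { unfold y2. destruct (Rle_dec (xm + del/2) x2).
        rewrite Rmin_left by lra; lra. rewrite Rmin_right by lra; lra. }
      set (y1 := (xm + y2) / 2).
      destruct (mvt F h y1 y2 HF) as [c [Hc Ec]]; [unfold y1; lra|].
      destruct (mvt F h xm y1 HF) as [c' [Hc' Ec']]; [unfold y1; lra|].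
      assert (0 < h c) by (specialize (Hr c); unfold y1 in *; lra).
      assert (0 <= h c').
      { destruct (Req_dec c' xm) as [->|]; auto. left. specialize (Hr c'). unfold y1 in *; lra. }
      assert (0 < h c * (y2 - y1)) by (apply Rmult_lt_0_compat; unfold y1; lra).
      assert (0 <= h c' * (y1 - xm)) by (apply Rmult_le_pos; unfold y1; lra).
      assert (F y2 <= F xm) by (apply Hm; lra).
      lra.
    - assert (Hx1 : x1 < xm).
      { destruct Hxm as [Hxm _]. destruct Hxm as [|E]; auto. subst. lra. }
      destruct (neg_near h xm (deriv_cont _ _ _ (Hh xm)) Hn) as [del [Hdel Hr]].
      set (y := Rmax (xm - del / 2) x1).
      assert (Hy : x1 <= y < xm /\ xm - del < y).
      { unfold y. destruct (Rle_dec (xm - del/2) x1).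
        rewrite Rmax_right by lra; lra. rewrite Rmax_left by lra; lra. }
      destruct (mvt F h y xm HF) as [c [Hc Ec]]; [lra|].
      assert (h c < 0) by (apply Hr; apply Rabs_def1; lra).
      assert (h c * (xm - y) < 0).
      { assert (0 < xm - y) by lra.
        assert (0 < - h c * (xm - y)) by (apply Rmult_lt_0_compat; lra). lra. }
      assert (F y <= F xm) by (apply Hm; lra).
      lra. }
  assert (S2 : forall x, x1 <= x -> 0 < dh x).
  { intros x Hx. apply Hpos. specialize (S1 x Hx). lra. }
  assert (S3 : forall p q, x1 <= p <= q -> h p <= h q).
  { intros p q Hpq. destruct (mvt h dh p q Hh) as [c [Hc Ec]]; [lra|].
    assert (0 < dh c) by (apply S2; lra).
    assert (0 <= dh c * (q - p)) by (apply Rmult_le_pos; lra). lra. }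
  assert (H2 : h x1 < h (x1 + 1)).
  { destruct (mvt h dh x1 (x1 + 1) Hh) as [c [Hc Ec]]; [lra|].
    assert (0 < dh c) by (apply S2; lra). 
    replace (x1 + 1 - x1) with 1 in Ec by ring. lra. }
  destruct (Hinf (h (x1 + 1)) (x1 + 1)) as [x [Hx Hhx]]; [lra|].
  assert (h (x1 + 1) <= h x) by (apply S3; lra).
  apply Rabs_def2 in Hhx. lra.
Qed.

Lemma maxp (F h dh : R -> R) (B : R) :
  (forall x, is_derive F x (h x)) ->
  (forall x, is_derive h x (dh x)) ->
  (forall x, B < F x -> 0 < dh x) ->
  (forall e x0, 0 < e -> exists x, x0 <= x /\ Rabs (h x) < e) ->
  (forall e x0, 0 < e -> exists x, x <= x0 /\ Rabs (h x) < e) ->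
  forall x, F x <= B.
Proof.
  intros HF Hh Hpos Hp Hm x.
  destruct (Rle_or_lt 0 (h x)) as [H|H].
  - eapply maxp_right; eauto.
  - set (F' := fun y => F (- y)). set (h' := fun y => - h (- y)). set (dh' := fun y => dh (- y)).
    replace (F x) with (F' (- x)) by (unfold F'; f_equal; ring).
    apply (maxp_right F' h' dh' B).
    + intro y. unfold F', h'.
      apply (is_derive_ext (fun y => F (opp y))); [intro; reflexivity|].
      eapply is_derive_ext; [intro; reflexivity|].
      replace (- h (- y)) with (-1 * h (- y)) by ring.
      apply (is_derive_comp F (fun y => - y) y (h (- y)) (-1)).
      apply HF. auto_derive; [exact I|lra].
    + intro y. unfold h', dh'.
      replace (dh (- y)) with ((-1) * ((-1) * dh (- y))) by ring.
      apply (is_derive_comp (fun z => - h z) (fun y => - y) y (-1 * dh (- y)) (-1)).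
      * apply (is_derive_ext (fun z => (-1) * h z)); [intro t; cbv beta; lra|]. apply is_derive_scal. apply Hh.
      * auto_derive; [exact I|lra].
    + intros y Hy. unfold dh'. apply Hpos. exact Hy.
    + intros e x0 He. destruct (Hm e (- x0) He) as [z [Hz Hhz]].
      exists (- z). split. lra. unfold h'. rewrite Ropp_involutive, Rabs_Ropp. auto.
    + unfold h'. rewrite Ropp_involutive. lra.
Qed.

Ltac etafix := cbn [Derive_n]; repeat match goal with |- context [fun x : R => ?f x] => progress change (fun x : R => f x) with f end.

Lemma sm1 (v : R -> R) x : smooth v -> ex_derive (Derive v) x.
Proof. intro H. exact (H 2%nat x). Qed.
Lemma sm2 (v : R -> R) x : smooth v -> ex_derive (Derive_n v 2) x.
Proof. intro H. exact (H 3%nat x). Qed.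

Lemma ex_cont (f : R -> R) x : ex_derive f x -> continuity_pt f x.
Proof. intros [d H]. eapply deriv_cont; eauto. Qed.

Lemma exp_s_ln (s y : R) : s <> 0 -> 0 < y -> exp (s * (ln y / s)) = y.
Proof. intros Hs Hy. replace (s * (ln y / s)) with (ln y) by (field; auto). apply exp_ln; auto. Qed.

Lemma sq_pos (s : R) : s <> 0 -> 0 < s ^ 2.
Proof. intro. simpl. rewrite Rmult_1_r. destruct (Rlt_or_le 0 s); [nra|]. destruct H0; nra. Qed.

Lemma chart_pos (s al : R) (v u : R -> R) : s <> 0 -> smooth v ->
  (forall r, u r = al * r + v (exp (s * r))) -> (forall r, 0 < Derive_n u 2 r) ->
  0 < Derive v 0 -> forall y, 0 <= y -> 0 < Derive v y + y * Derive_n v 2 y.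
Proof.
  intros Hs Hv Hu Hpos H0 y Hy. destruct Hy as [Hy| <-].
  2: { rewrite Rmult_0_l, Rplus_0_r. auto. }
  destruct (side_deriv s al v u Hv Hu) as [_ D2].
  specialize (Hpos (ln y / s)). rewrite D2, exp_s_ln in Hpos by auto.
  assert (0 < s ^ 2 * y) by (apply Rmult_lt_0_compat; auto; apply sq_pos; auto).
  destruct (Rlt_or_le 0 (Derive v y + y * Derive_n v 2 y)); auto. nra.
Qed.

Lemma chart_q (s al : R) (v u : R -> R) : s <> 0 -> smooth v ->
  (forall r, u r = al * r + v (exp (s * r))) -> (forall r, 0 < Derive_n u 2 r) ->
  0 < Derive v 0 -> forall y, 0 <= y -> 0 <= y * Derive v y.
Proof.
  intros Hs Hv Hu Hpos H0 y Hy.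
  assert (Hd : forall x, is_derive (fun x => x * Derive v x) x (Derive v x + x * Derive_n v 2 x)).
  { intro x. auto_derive. apply sm1; auto. etafix. ring. }
  destruct (mvt _ _ 0 y Hd Hy) as [c [Hc E]].
  assert (0 < Derive v c + c * Derive_n v 2 c) by (eapply chart_pos; eauto; lra).
  rewrite Rmult_0_l in E. nra.
Qed.

Lemma chart_ident (s al al0 t c N : R) (nn : nat) (v w u u0 : R -> R) :
  s <> 0 -> smooth v -> smooth w ->
  (forall r, u r = al * r + v (exp (s * r))) ->
  (forall r, u0 r = al0 * r + w (exp (s * r))) ->
  (forall r, 0 < Derive u r) -> (forall r, 0 < Derive_n u 2 r) ->
  0 < Derive v 0 -> 0 < al ->
  (forall r, u r = u0 r + t * ln (Derive u r ^ nn * Derive_n u 2 r * exp (- N * r)) + c) ->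
  al = al0 + t * (s - N).
Proof.
  intros Hs Hv Hw Hu Hu0 Hd1 Hd2 Hv0 Hal Heq.
  destruct (side_deriv s al v u Hv Hu) as [D1 D2].
  set (Phi := fun y => (al + s * y * Derive v y) ^ nn * (s ^ 2 * (Derive v y + y * Derive_n v 2 y))).
  set (RHS := fun y => w y - v y + t * ln (Phi y) + c).
  assert (Key : forall r, (al - al0 - t * (s - N)) * r = RHS (exp (s * r))).
  { intro r. specialize (Heq r). rewrite Hu, Hu0 in Heq.
    assert (P1 : 0 < Derive u r) by auto.
    assert (P2 : 0 < Derive v (exp (s * r)) + exp (s * r) * Derive_n v 2 (exp (s * r)))
      by (eapply chart_pos; eauto; left; apply exp_pos).
    rewrite D1, D2 in Heq. rewrite D1 in P1.
    assert (E : (al + s * exp (s * r) * Derive v (exp (s * r))) ^ nn *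
       (s ^ 2 * exp (s * r) * (Derive v (exp (s * r)) + exp (s * r) * Derive_n v 2 (exp (s * r)))) *
       exp (- N * r) = Phi (exp (s * r)) * exp (s * r) * exp (- N * r)).
    { unfold Phi. ring. }
    rewrite E in Heq.
    assert (0 < Phi (exp (s * r))).
    { unfold Phi. apply Rmult_lt_0_compat. apply pow_lt. auto.
      apply Rmult_lt_0_compat; auto. apply sq_pos; auto. }
    rewrite (ln_mult (Phi (exp (s * r)) * exp (s * r)) (exp (- N * r))) in Heq
      by (try apply Rmult_lt_0_compat; auto; apply exp_pos).
    rewrite (ln_mult (Phi (exp (s * r))) (exp (s * r))) in Heq by (auto; apply exp_pos).
    rewrite !ln_exp in Heq.
    unfold RHS. nra. }
  assert (HPhi0 : 0 < Phi 0).
  { unfold Phi. replace (al + s * 0 * Derive v 0) with al by ring.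
    replace (Derive v 0 + 0 * Derive_n v 2 0) with (Derive v 0) by ring. apply Rmult_lt_0_compat.
    apply pow_lt; auto. apply Rmult_lt_0_compat; auto. apply sq_pos; auto. }
  assert (Hc : continuity_pt RHS 0).
  { apply ex_cont. unfold RHS, Phi. auto_derive.
    assert (X1 := smooth_ex w 0 Hw). assert (X2 := smooth_ex v 0 Hv).
    assert (X3 := sm1 v 0 Hv). assert (X4 := sm2 v 0 Hv).
    repeat split; auto. }
  destruct (Hc 1) as [del [Hdel Hcl]]; [lra|].
  destruct (Req_dec (al - al0 - t * (s - N)) 0) as [Z|Z]; [lra|]. exfalso.
  set (kap := al - al0 - t * (s - N)) in *.
  set (lam := Rmax (1 - ln del) ((Rabs (RHS 0) + 2) * Rabs s / Rabs kap)).
  set (r := - lam / s).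
  assert (Hlam1 : 1 - ln del <= lam) by apply Rmax_l.
  assert (Hlam2 : (Rabs (RHS 0) + 2) * Rabs s / Rabs kap <= lam) by apply Rmax_r.
  assert (Hsr : s * r = - lam) by (unfold r; field; auto).
  assert (Hy : exp (s * r) < del).
  { rewrite Hsr. rewrite <- (exp_ln del) by auto. apply exp_increasing. lra. }
  assert (Hb : R_dist (RHS (exp (s * r))) (RHS 0) < 1).
  { destruct (Req_dec (exp (s * r)) 0) as [E0|E0].
    - rewrite E0. unfold R_dist. rewrite Rminus_eq_0, Rabs_R0. lra.
    - apply Hcl. split. split. exact I. intro E; apply E0; auto.
      simpl. unfold R_dist. rewrite Rminus_0_r, Rabs_pos_eq. auto. left; apply exp_pos. }
  rewrite <- Key in Hb. unfold R_dist in Hb.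
  assert (Hk : 0 < Rabs kap) by (apply Rabs_pos_lt; auto).
  assert (Hs' : 0 < Rabs s) by (apply Rabs_pos_lt; auto).
  assert (Rabs (kap * r) = Rabs kap * lam / Rabs s).
  { unfold r. rewrite Rabs_mult. unfold Rdiv. rewrite Rabs_mult, Rabs_Ropp, Rabs_Rinv by auto.
    rewrite (Rabs_pos_eq lam). ring. assert (0 <= (Rabs (RHS 0) + 2) * Rabs s / Rabs kap) by (apply Rdiv_le_0_compat; [apply Rmult_le_pos; [pose proof (Rabs_pos (RHS 0)); lra|lra]|lra]). lra. }
  assert ((Rabs (RHS 0) + 2) <= Rabs kap * lam / Rabs s).
  { apply (Rmult_le_compat_r (Rabs kap / Rabs s)) in Hlam2; [|apply Rdiv_le_0_compat; lra].
    replace ((Rabs (RHS 0) + 2) * Rabs s / Rabs kap * (Rabs kap / Rabs s)) with (Rabs (RHS 0) + 2) in Hlam2 by (field; lra).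
    replace (lam * (Rabs kap / Rabs s)) with (Rabs kap * lam / Rabs s) in Hlam2 by (field; lra). lra. }
  assert (Rabs (kap * r) <= Rabs (kap * r - RHS 0) + Rabs (RHS 0)).
  { replace (kap * r) with ((kap * r - RHS 0) + RHS 0) at 1 by ring. apply Rabs_triang. }
  lra.
Qed.

Lemma end_small (s : R) (Q hh : R -> R) : s <> 0 -> continuity_pt Q 0 -> Q 0 = 0 ->
  (forall r, hh r = Q (exp (s * r))) -> forall e x0, 0 < e ->
  (0 < s -> exists r, r <= x0 /\ Rabs (hh r) < e) /\
  (s < 0 -> exists r, x0 <= r /\ Rabs (hh r) < e).
Proof.
  intros Hs Hc HQ Hh e x0 He.
  destruct (Hc e He) as [del [Hdel Hcl]].
  assert (Key : forall r, s * r <= ln (del / 2) -> Rabs (hh r) < e).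
  { intros r Hr. rewrite Hh.
    assert (Hy : exp (s * r) <= del / 2).
    { rewrite <- (exp_ln (del / 2)) by lra. destruct (Req_dec (s * r) (ln (del/2))) as [->|]; [lra|].
      left. apply exp_increasing. lra. }
    assert (R_dist (Q (exp (s * r))) (Q 0) < e).
    { apply Hcl. split. split. exact I. intro E. pose proof (exp_pos (s * r)). lra.
      simpl. unfold R_dist. rewrite Rminus_0_r, Rabs_pos_eq. lra. left; apply exp_pos. }
    unfold R_dist in H. rewrite HQ, Rminus_0_r in H. auto. }
  set (L := ln (del / 2) / s).
  assert (HL : s * L = ln (del / 2)) by (unfold L; field; auto).
  split; intro Hsg.
  - exists (Rmin x0 L). split. apply Rmin_l. apply Key.
    rewrite <- HL. apply Rmult_le_compat_l. lra. apply Rmin_r.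
  - exists (Rmax x0 L). split. apply Rmax_l. apply Key.
    rewrite <- HL. assert (L <= Rmax x0 L) by apply Rmax_r. nra.
Qed.

Lemma posbound (f : R -> R) : (forall y, 0 <= y <= 1 -> continuity_pt f y) ->
  (forall y, 0 <= y <= 1 -> 0 < f y) ->
  exists m M, 0 < m /\ forall y, 0 <= y <= 1 -> m <= f y /\ f y <= M.
Proof.
  intros Hc Hp.
  destruct (continuity_ab_min f 0 1) as [ym [Hm Hym]]; [lra|auto|].
  destruct (continuity_ab_maj f 0 1) as [yM [HM HyM]]; [lra|auto|].
  exists (f ym), (f yM). split. apply Hp; auto. intros y Hy. split; auto.
Qed.

Lemma ratio_bound (s al : R) (v u G gg : R -> R) : s <> 0 -> smooth v -> smooth G ->
  (forall y, 0 < G y) -> (forall r, u r = al * r + v (exp (s * r))) ->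
  (forall r, 0 < Derive_n u 2 r) -> 0 < Derive v 0 ->
  (forall r, gg r = exp (s * r) * G (exp (s * r))) ->
  exists m M, 0 < m /\ forall r, s * r <= 0 -> m * gg r <= Derive_n u 2 r /\ Derive_n u 2 r <= M * gg r.
Proof.
  intros Hs Hv HG HGp Hu Hpos Hv0 Hg.
  set (Psi := fun y => s ^ 2 * (Derive v y + y * Derive_n v 2 y) / G y).
  assert (Hc : forall y, 0 <= y <= 1 -> continuity_pt Psi y).
  { intros y _. apply ex_cont. unfold Psi. auto_derive.
    assert (X2 := smooth_ex v y Hv). assert (X5 := smooth_ex G y HG).
    assert (X3 := sm1 v y Hv). assert (X4 := sm2 v y Hv). assert (X6 := Rgt_not_eq _ _ (HGp y)).
    repeat split; auto. }
  assert (Hp : forall y, 0 <= y <= 1 -> 0 < Psi y).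
  { intros y Hy. unfold Psi. apply Rdiv_lt_0_compat; auto.
    apply Rmult_lt_0_compat. apply sq_pos; auto. eapply chart_pos; eauto; lra. }
  destruct (posbound Psi Hc Hp) as [m [M [Hm HmM]]].
  { exists m, M. split; auto. intros r Hr.
    destruct (side_deriv s al v u Hv Hu) as [_ D2].
    set (y := exp (s * r)) in *.
    assert (Hy : 0 < y <= 1).
    { split. apply exp_pos. unfold y. rewrite <- exp_0. destruct Hr as [Hr| ->]; [left; apply exp_increasing; auto| lra]. }
    assert (E : Derive_n u 2 r = Psi y * gg r).
    { rewrite D2, Hg. fold y. unfold Psi. field. apply Rgt_not_eq, HGp. }
    rewrite E. specialize (HmM y (conj (Rlt_le _ _ (proj1 Hy)) (proj2 Hy))).
    assert (0 < gg r) by (rewrite Hg; apply Rmult_lt_0_compat; [apply exp_pos|apply HGp]).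
    split; apply Rmult_le_compat_r; lra. }
Qed.

Lemma maxp_neg (F h dh : R -> R) (B : R) :
  (forall x, is_derive F x (h x)) ->
  (forall x, is_derive h x (dh x)) ->
  (forall x, F x < B -> dh x < 0) ->
  (forall e x0, 0 < e -> exists x, x0 <= x /\ Rabs (h x) < e) ->
  (forall e x0, 0 < e -> exists x, x <= x0 /\ Rabs (h x) < e) ->
  forall x, B <= F x.
Proof.
  intros HF Hh Hpos Hp Hm x.
  assert (- F x <= - B); [|lra].
  apply (maxp (fun x => - F x) (fun x => - h x) (fun x => - dh x) (- B)).
  - intro y. apply (is_derive_ext (fun x => (-1) * F x)); [intro; cbv beta; lra|].
    replace (- h y) with ((-1) * h y) by ring. apply is_derive_scal. apply HF.
  - intro y. apply (is_derive_ext (fun x => (-1) * h x)); [intro; cbv beta; lra|].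
    replace (- dh y) with ((-1) * dh y) by ring. apply is_derive_scal. apply Hh.
  - intros y Hy. assert (dh y < 0) by (apply Hpos; lra). lra.
  - intros e x0 He. destruct (Hp e x0 He) as [z [? ?]]. exists z. rewrite Rabs_Ropp. auto.
  - intros e x0 He. destruct (Hm e x0 He) as [z [? ?]]. exists z. rewrite Rabs_Ropp. auto.
Qed.

Lemma ln_le_inv (x y : R) : 0 < x -> 0 < y -> ln x <= ln y -> x <= y.
Proof.
  intros Hx Hy H. destruct (Rle_or_lt x y); auto.
  assert (ln y < ln x) by (apply ln_increasing; auto). lra.
Qed.

Ltac exd := repeat match goal with
  | |- _ /\ _ => split
  | |- True => exact I
  | |- ex_derive _ _ => first [apply smooth_ex; assumption | apply sm1; assumption | apply sm2; assumption]
  end.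

Theorem mainTheorem4 :
  forall (n k : nat) (a0 b0 : R) (u0 : R -> R) (u : R -> R -> R),
    (2 <= n)%nat -> (1 <= k)%nat ->
    0 < a0 -> a0 < b0 ->
    calabi_potential k a0 b0 u0 ->
    (* Case I *)
    a0 * (INR n + INR k) > b0 * (INR n - INR k) ->
    let T := (b0 - a0) / (2 * INR k) in
    (forall r, u 0 r = u0 r) ->
    (* omega(t) = i dd^c u t is a smooth Kahler form on X for t in [0,T) *)
    (forall t, 0 <= t < T ->
       exists a b, 0 < a < b /\ calabi_potential k a b (u t)) ->
    (* omega(t) = omega_0 - t Ric(omega(t)) *)
    (forall t, 0 <= t < T ->
       exists c, forall r, u t r = u0 r + t * ln (vol_dens n (u t) r) + c) ->
    exists (g : R -> R) (C : R),
      radial_volume_form k g /\ 0 < C /\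
      forall t r, 0 <= t < T ->
        / C * (T - t) * (g r * exp (- INR n * r)) <= vol_dens n (u t) r /\
        vol_dens n (u t) r <= C * (T - t) * (g r * exp (- INR n * r)).
Proof.
  intros n k a0 b0 u0 u Hn Hk Ha0 Hab Hcal0 HcaseI T Hu0 Hcal Heq.
  set (K := INR k) in *. set (N := INR n) in *.
  assert (HK : 0 < K) by (apply lt_0_INR; lia).
  assert (HN : 0 < N) by (apply lt_0_INR; lia).
  assert (HKne : K <> 0) by lra.
  assert (HKne' : - K <> 0) by lra.
  assert (HT : 0 < T) by (unfold T; apply Rdiv_lt_0_compat; lra).
  assert (HTne : T <> 0) by lra.
  set (aT := a0 + (K - N) * T).
  assert (HaT : 0 < aT).
  { assert (E : aT * (2 * K) = a0 * (N + K) - b0 * (N - K)) by (unfold aT, T; field; lra).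
    nra. }
  assert (HbT : b0 - (K + N) * T = aT) by (unfold aT, T; field; lra).
  destruct Hcal0 as [Hs0 [Hd0 [Hdd0 [v0 [vi0 [Hv0 [Hvi0 [Hv00 [Hvi00 [Hl0 Hr0]]]]]]]]]].
  change (INR k) with K in Hl0, Hr0.
  set (g := fun r => exp ((aT * r - u0 r) / T + N * r)).
  set (G0 := fun y => exp ((- (1 / T)) * v0 y)).
  set (Ginf := fun y => exp ((- (1 / T)) * vi0 y)).
  assert (Hgp : forall r, 0 < g r) by (intro; apply exp_pos).
  assert (Hg0 : forall r, g r = exp (K * r) * G0 (exp (K * r))).
  { intro r. unfold g, G0. rewrite <- exp_plus. f_equal. rewrite Hl0. unfold aT. field. auto. }
  assert (Hginf : forall r, g r = exp (- K * r) * Ginf (exp (- K * r))).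
  { intro r. unfold g, Ginf. rewrite <- exp_plus. f_equal. rewrite Hr0. rewrite <- HbT. field. auto. }
  assert (HG0s : smooth G0).
  { apply smooth_exp. apply (smooth_mult (fun _ => - (1 / T)) v0); auto. apply smooth_const. }
  assert (HGis : smooth Ginf).
  { apply smooth_exp. apply (smooth_mult (fun _ => - (1 / T)) vi0); auto. apply smooth_const. }
  assert (Hrad : radial_volume_form k g).
  { split; auto. exists G0, Ginf. repeat split; auto; try apply exp_pos. }
  destruct (ratio_bound K a0 v0 u0 G0 g) as [m1 [M1 [Hm1 HB1]]]; auto.
  { intro; apply exp_pos. }
  destruct (ratio_bound (- K) b0 vi0 u0 Ginf g) as [m2 [M2 [Hm2 HB2]]]; auto.
  { intro; apply exp_pos. }
  set (m := Rmin m1 m2). set (M := Rmax M1 M2).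
  assert (Hm : 0 < m) by (unfold m; apply Rmin_glb_lt; auto).
  assert (HmM : forall r, m * g r <= Derive_n u0 2 r /\ Derive_n u0 2 r <= M * g r).
  { intro r. assert (0 < g r) by auto.
    assert (m <= m1 /\ m <= m2) by (unfold m; split; [apply Rmin_l|apply Rmin_r]).
    assert (M1 <= M /\ M2 <= M) by (unfold M; split; [apply Rmax_l|apply Rmax_r]).
    destruct (Rle_or_lt r 0).
    - assert (Q : K * r <= 0) by nra. destruct (HB1 r Q) as [X Y]. split; nra.
    - assert (Q : - K * r <= 0) by nra. destruct (HB2 r Q) as [X Y]. split; nra. }
  assert (HM : 0 < M).
  { destruct (HmM 0). assert (0 < g 0) by auto. assert (0 < Derive_n u0 2 0) by auto. nra. }
  destruct (side_deriv K a0 v0 u0 Hv0 Hl0) as [D01 D02].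
  destruct (side_deriv (- K) b0 vi0 u0 Hvi0 Hr0) as [D01' D02'].
  assert (Hu0' : forall r, a0 <= Derive u0 r <= b0).
  { intro r. split.
    - rewrite D01. assert (0 <= exp (K * r) * Derive v0 (exp (K * r)))
        by (apply (chart_q K a0 v0 u0); auto; left; apply exp_pos). nra.
    - rewrite D01'. assert (0 <= exp (- K * r) * Derive vi0 (exp (- K * r)))
        by (apply (chart_q (- K) b0 vi0 u0); auto; left; apply exp_pos). nra. }
  set (amin := Rmin a0 aT).
  assert (Hamin : 0 < amin) by (unfold amin; apply Rmin_glb_lt; auto).
  set (Cl := amin ^ (n - 1) * m / T). set (Cu := b0 ^ (n - 1) * M / T).
  assert (HCl : 0 < Cl) by (unfold Cl; apply Rdiv_lt_0_compat; auto; apply Rmult_lt_0_compat; auto; apply pow_lt; auto).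
  assert (HCu : 0 < Cu) by (unfold Cu; apply Rdiv_lt_0_compat; auto; apply Rmult_lt_0_compat; auto; apply pow_lt; lra).
  assert (Key : forall t r, 0 <= t < T ->
     Cl * (T - t) * (g r * exp (- N * r)) <= vol_dens n (u t) r /\
     vol_dens n (u t) r <= Cu * (T - t) * (g r * exp (- N * r))).
  { intros t r [Ht0 HtT].
    assert (HOm : 0 < g r * exp (- N * r)) by (apply Rmult_lt_0_compat; auto; apply exp_pos).
    destruct (Req_dec t 0) as [Ht|Ht].
    - subst t.
      assert (EV : vol_dens n (u 0) r = Derive u0 r ^ (n - 1) * Derive_n u0 2 r * exp (- N * r)).
      { unfold vol_dens. rewrite (Derive_ext (u 0) u0) by auto. rewrite (Derive_n_ext (u 0) u0) by auto. reflexivity. }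
      rewrite EV. destruct (HmM r) as [L U]. destruct (Hu0' r) as [A B].
      assert (amin <= a0) by (unfold amin; apply Rmin_l).
      assert (P1 : amin ^ (n - 1) <= Derive u0 r ^ (n - 1)) by (apply pow_incr; lra).
      assert (P2 : Derive u0 r ^ (n - 1) <= b0 ^ (n - 1)) by (apply pow_incr; lra).
      assert (0 < amin ^ (n - 1)) by (apply pow_lt; auto).
      assert (0 < exp (- N * r)) by apply exp_pos.
      assert (0 < g r) by auto.
      replace (Cl * (T - 0) * (g r * exp (- N * r))) with (amin ^ (n - 1) * (m * g r) * exp (- N * r))
        by (unfold Cl; field; auto).
      replace (Cu * (T - 0) * (g r * exp (- N * r))) with (b0 ^ (n - 1) * (M * g r) * exp (- N * r))
        by (unfold Cu; field; auto).
      split.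
      + apply Rmult_le_compat_r; [lra|]. apply Rmult_le_compat; nra.
      + apply Rmult_le_compat_r; [lra|]. apply Rmult_le_compat; try nra.
    - assert (Htp : 0 < t) by lra.
      assert (Htne : t <> 0) by lra.
      destruct (Hcal t (conj Ht0 HtT)) as [a [b [[Ha Hab'] Hct]]].
      destruct Hct as [Hst [Hdt [Hddt [vt [vit [Hvt [Hvit [Hvt0 [Hvit0 [Hlt Hrt]]]]]]]]]].
      change (INR k) with K in Hlt, Hrt.
      destruct (Heq t (conj Ht0 HtT)) as [c Hc].
      set (ut := u t) in *.
      assert (Hc' : forall r, ut r = u0 r + t * ln (Derive ut r ^ (n - 1) * Derive_n ut 2 r * exp (- N * r)) + c)
        by exact Hc.
      assert (Ea : a = a0 + t * (K - N)).
      { apply (chart_ident K a a0 t c N (n - 1) vt v0 ut u0); auto. }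
      assert (Eb : b = b0 + t * (- K - N)).
      { apply (chart_ident (- K) b b0 t c N (n - 1) vit vi0 ut u0); auto. lra. }
      destruct (side_deriv K a vt ut Hvt Hlt) as [Dt1 Dt2].
      destruct (side_deriv (- K) b vit ut Hvit Hrt) as [Dt1' Dt2'].
      assert (Hut' : forall r, a <= Derive ut r <= b).
      { intro r'. split.
        - rewrite Dt1. assert (0 <= exp (K * r') * Derive vt (exp (K * r')))
            by (apply (chart_q K a vt ut); auto; left; apply exp_pos). nra.
        - rewrite Dt1'. assert (0 <= exp (- K * r') * Derive vit (exp (- K * r')))
            by (apply (chart_q (- K) b vit ut); auto; left; apply exp_pos). nra. }
      set (lam := t / T).
      assert (Hlam : 0 < lam < 1) by (unfold lam; split; [apply Rdiv_lt_0_compat; auto|replace 1 with (T / T) by (field; auto); unfold Rdiv; apply Rmult_lt_compat_r; [apply Rinv_0_lt_compat|]; lra]).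
      assert (Hamin_a : amin <= a).
      { assert (a = a0 + lam * (aT - a0)) by (rewrite Ea; unfold lam, aT; field; auto).
        assert (amin <= a0 /\ amin <= aT) by (unfold amin; split; [apply Rmin_l|apply Rmin_r]).
        nra. }
      assert (Hb_b0 : b <= b0) by nra.
      set (E := fun r => Derive ut r ^ (n - 1) * Derive_n ut 2 r / g r).
      set (F := fun r => ln (E r)).
      set (h := fun r => (Derive ut r - Derive u0 r - t * (aT - Derive u0 r) / T) / t).
      set (dh := fun r => (Derive_n ut 2 r - Derive_n u0 2 r + t * Derive_n u0 2 r / T) / t).
      assert (HEp : forall r, 0 < E r).
      { intro r'. unfold E. apply Rdiv_lt_0_compat; auto. apply Rmult_lt_0_compat; auto. apply pow_lt; auto. }
      assert (Hvol : forall r, vol_dens n ut r = E r * (g r * exp (- N * r))).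
      { intro r'. unfold vol_dens, E. change (INR n) with N.
        assert (g r' <> 0) by (apply Rgt_not_eq, Hgp). assert (exp (- N * r') <> 0) by (apply Rgt_not_eq, exp_pos).
        field; auto. }
      assert (Fcl : forall r, (ut r - u0 r - c - t * (aT * r - u0 r) / T) / t = F r).
      { intro r'. unfold F. specialize (Hc r'). rewrite Hvol in Hc.
        rewrite ln_mult in Hc by (auto; apply Rmult_lt_0_compat; auto; apply exp_pos).
        rewrite ln_mult in Hc by (auto; apply exp_pos).
        unfold g in Hc. rewrite !ln_exp in Hc. rewrite Hc. field. split; auto. }
      assert (HF : forall r, is_derive F r (h r)).
      { intro r'. eapply is_derive_ext; [exact Fcl|]. unfold h. auto_derive.
        - exd.
        - etafix. field. auto. }
      assert (Hh : forall r, is_derive h r (dh r)).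
      { intro r'. unfold h, dh. auto_derive.
        - exd.
        - etafix. field. auto. }
      assert (HQ1 : forall e x0, 0 < e -> exists x, x0 <= x /\ Rabs (h x) < e).
      { set (Q := fun z => (- K * z * Derive vit z - (1 - lam) * (- K * z * Derive vi0 z)) / t).
        intros e x0 He.
        apply (proj2 (end_small (- K) Q h HKne' ltac:(apply ex_cont; unfold Q; auto_derive; exd) ltac:(unfold Q; field; auto)
             ltac:(intro x; unfold h, Q; rewrite Dt1', D01'; rewrite Eb, <- HbT; unfold lam; field; auto) e x0 He)).
        lra. }
      assert (HQ2 : forall e x0, 0 < e -> exists x, x <= x0 /\ Rabs (h x) < e).
      { set (Q := fun z => (K * z * Derive vt z - (1 - lam) * (K * z * Derive v0 z)) / t).
        intros e x0 He.
        apply (proj1 (end_small K Q h HKne ltac:(apply ex_cont; unfold Q; auto_derive; exd) ltac:(unfold Q; field; auto)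
             ltac:(intro x; unfold h, Q; rewrite Dt1, D01; rewrite Ea; unfold lam, aT; field; auto) e x0 He)).
        lra. }
      set (Bup := b0 ^ (n - 1) * ((T - t) / T) * M).
      set (Blo := amin ^ (n - 1) * ((T - t) / T) * m).
      assert (HBup : 0 < Bup).
      { unfold Bup. apply Rmult_lt_0_compat; auto. apply Rmult_lt_0_compat. apply pow_lt; lra.
        apply Rdiv_lt_0_compat; lra. }
      assert (HBlo : 0 < Blo).
      { unfold Blo. apply Rmult_lt_0_compat; auto. apply Rmult_lt_0_compat. apply pow_lt; lra.
        apply Rdiv_lt_0_compat; lra. }
      assert (Up : forall x, F x <= ln Bup).
      { apply (maxp F h dh); auto.
        intros x Hx. destruct (Rlt_or_le 0 (dh x)) as [|Hd]; auto. exfalso.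
        assert (X : Derive_n ut 2 x <= (1 - lam) * Derive_n u0 2 x).
        { unfold dh in Hd. unfold lam.
          assert (Derive_n ut 2 x - Derive_n u0 2 x + t * Derive_n u0 2 x / T <= 0).
          { apply (Rmult_le_compat_r t) in Hd; [|lra].
            replace ((Derive_n ut 2 x - Derive_n u0 2 x + t * Derive_n u0 2 x / T) / t * t) with
              (Derive_n ut 2 x - Derive_n u0 2 x + t * Derive_n u0 2 x / T) in Hd by (field; auto). lra. }
          replace ((1 - t / T) * Derive_n u0 2 x) with (Derive_n u0 2 x - t * Derive_n u0 2 x / T) by (field; auto).
          lra. }
        assert (Y : E x <= Bup).
        { unfold E, Bup. destruct (HmM x) as [_ U]. destruct (Hut' x) as [A B].
          assert (P2 : Derive ut x ^ (n - 1) <= b0 ^ (n - 1)) by (apply pow_incr; lra).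
          assert (0 < Derive ut x ^ (n - 1)) by (apply pow_lt; lra).
          assert (0 < g x) by auto.
          assert (Z : Derive_n ut 2 x <= (1 - lam) * (M * g x)) by nra.
          apply (Rmult_le_reg_r (g x)); auto.
          replace (Derive ut x ^ (n - 1) * Derive_n ut 2 x / g x * g x) with
            (Derive ut x ^ (n - 1) * Derive_n ut 2 x) by (field; lra).
          replace (b0 ^ (n - 1) * ((T - t) / T) * M * g x) with
            (b0 ^ (n - 1) * ((1 - lam) * (M * g x))) by (unfold lam; field; auto).
          apply Rmult_le_compat; try lra. apply Rlt_le; auto. }
        assert (ln (E x) <= ln Bup) by (apply ln_le; auto).
        unfold F in Hx. lra. }
      assert (Lo : forall x, ln Blo <= F x).
      { apply (maxp_neg F h dh); auto.
        intros x Hx. destruct (Rlt_or_le (dh x) 0) as [|Hd]; auto. exfalso.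
        assert (X : (1 - lam) * Derive_n u0 2 x <= Derive_n ut 2 x).
        { unfold dh in Hd. unfold lam.
          assert (0 <= Derive_n ut 2 x - Derive_n u0 2 x + t * Derive_n u0 2 x / T).
          { apply (Rmult_le_compat_r t) in Hd; [|lra].
            replace ((Derive_n ut 2 x - Derive_n u0 2 x + t * Derive_n u0 2 x / T) / t * t) with
              (Derive_n ut 2 x - Derive_n u0 2 x + t * Derive_n u0 2 x / T) in Hd by (field; auto). lra. }
          replace ((1 - t / T) * Derive_n u0 2 x) with (Derive_n u0 2 x - t * Derive_n u0 2 x / T) by (field; auto).
          lra. }
        assert (Y : Blo <= E x).
        { unfold E, Blo. destruct (HmM x) as [L _]. destruct (Hut' x) as [A B].
          assert (P2 : amin ^ (n - 1) <= Derive ut x ^ (n - 1)) by (apply pow_incr; lra).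
          assert (0 < amin ^ (n - 1)) by (apply pow_lt; lra).
          assert (0 < g x) by auto.
          assert (Z : (1 - lam) * (m * g x) <= Derive_n ut 2 x) by nra.
          apply (Rmult_le_reg_r (g x)); auto.
          replace (Derive ut x ^ (n - 1) * Derive_n ut 2 x / g x * g x) with
            (Derive ut x ^ (n - 1) * Derive_n ut 2 x) by (field; lra).
          replace (amin ^ (n - 1) * ((T - t) / T) * m * g x) with
            (amin ^ (n - 1) * ((1 - lam) * (m * g x))) by (unfold lam; field; auto).
          apply Rmult_le_compat; try lra. apply Rmult_le_pos; [lra|]. apply Rmult_le_pos; lra. }
        assert (ln Blo <= ln (E x)) by (apply ln_le; auto).
        unfold F in Hx. lra. }
      rewrite Hvol.
      assert (U1 : E r <= Bup) by (apply ln_le_inv; auto; apply Up).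
      assert (L1 : Blo <= E r) by (apply ln_le_inv; auto; apply Lo).
      replace (Cl * (T - t) * (g r * exp (- N * r))) with (Blo * (g r * exp (- N * r))) by (unfold Blo, Cl; field; auto).
      replace (Cu * (T - t) * (g r * exp (- N * r))) with (Bup * (g r * exp (- N * r))) by (unfold Bup, Cu; field; auto).
      split; apply Rmult_le_compat_r; lra. }
  exists g, (Rmax Cu (/ Cl)). split; auto.
  assert (HC1 : Cu <= Rmax Cu (/ Cl)) by apply Rmax_l.
  assert (HC2 : / Cl <= Rmax Cu (/ Cl)) by apply Rmax_r.
  assert (HC : 0 < Rmax Cu (/ Cl)) by lra.
  split; auto.
  assert (HiC : / Rmax Cu (/ Cl) <= Cl).
  { assert (X : / Rmax Cu (/ Cl) <= / / Cl) by (apply Rinv_le_contravar; [apply Rinv_0_lt_compat; auto | exact HC2]).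
    rewrite Rinv_inv in X. exact X. }
  intros t r Ht. destruct (Key t r Ht) as [L U].
  assert (0 < g r * exp (- N * r)) by (apply Rmult_lt_0_compat; auto; apply exp_pos).
  assert (0 < T - t) by lra.
  split.
  - eapply Rle_trans; [|exact L]. apply Rmult_le_compat_r; [lra|]. apply Rmult_le_compat_r; lra.
  - eapply Rle_trans; [exact U|]. apply Rmult_le_compat_r; [lra|]. apply Rmult_le_compat_r; lra.
Qed.
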